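(* Let $\tilde\alpha=(\tilde\alpha_1,\dots,\tilde\alpha_n)\in\mathbb{F}_{2^m}^n$ be a support tuple, let $t$ be a positive integer, and let $C\subseteq\mathbb{F}_2^n$ be a binary Goppa code. Consider the following procedure $\mathrm{GoppaGCD}(\tilde\alpha,t,C)$: (1) Set $\tilde g:=0$ and choose an $\mathbb{F}_2$-basis $B$ of $C$. (2) For each $c\in B$ in turn: set $\hat s_{c,\tilde\alpha}:=\sum_{i\in I_c}\prod_{j\in I_c\setminus\{i\}}(x-\tilde\alpha_j)$ and $\tilde g:=\gcd(\tilde g,\hat s_{c,\tilde\alpha})$; if $\deg(\tilde g)<2t$, return Fail. (3) For $i=1,\dots,n$: while $\tilde g(\tilde\alpha_i)=0$, replace $\tilde g$ by $\tilde g/(x-\tilde\alpha_i)$. (4) If $\deg(\tilde g)<2t$ return Fail; otherwise return $\tilde g$. Then this procedure terminates, and the following are equivalent: (a) $\mathrm{GoppaGCD}(\tilde\alpha,t,C)$ returns a degree-$u$ extension of $\tilde\alpha$ with respect to $C$ for some $u\ge 2t$; (b) $\tilde\alpha$ is degree-$u$ extendable with respect to $C$ for some $u\ge 2t$. Otherwise, the procedure returns Fail.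
   Context: $\mathbb{F}_{2^m}$ is the finite field with $2^m$ elements. A support tuple is $\tilde\alpha\in\mathbb{F}_{2^m}^n$ with pairwise distinct entries. For $c\in\mathbb{F}_2^n$, $I_c=\{i\mid c_i=1\}$. For a support tuple $\alpha$ and a polynomial $g\in\mathbb{F}_{2^m}[x]$ with $g(\alpha_i)\neq 0$ for all $i$ (a Goppa polynomial for $\alpha$), the binary Goppa code is $\Gamma(\alpha,g)=\{c\in\mathbb{F}_2^n\mid \sum_{i\in I_c}(x-\alpha_i)^{-1}=0\text{ in }\mathbb{F}_{2^m}[x]/\langle g\rangle\}$; equivalently $c\in\Gamma(\alpha,g)$ iff $g\mid \sum_{i\in I_c}\prod_{j\in I_c\setminus\{i\}}(x-\alpha_j)$. A binary Goppa code is a code of the form $\Gamma(\alpha,g)$. For $u\in\mathbb{N}_+$, a degree-$u$ extension of $\tilde\alpha$ with respect to $C$ is a Goppa polynomial $\tilde g$ for $\tilde\alpha$ with $\deg\tilde g=u$ and $C\subseteq\Gamma(\tilde\alpha,\tilde g)$; $\tilde\alpha$ is degree-$u$ extendable with respect to $C$ if such an extension exists. The gcd is taken as the monic gcd, with $\gcd(0,h)$ the monic associate of $h$. *)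

(* Defs.v *)
From HB Require Import structures.
From mathcomp Require Import all_boot all_order all_algebra all_field.
Set Implicit Arguments. Unset Strict Implicit. Unset Printing Implicit Defensive.
Import GRing.Theory.
Local Open Scope ring_scope.

Section Goppa.
Variables (F : fieldType) (n : nat).

Definition word := 'rV['F_2]_n.

Definition supp (c : word) : {set 'I_n} := [set i | c 0 i == 1].

Definition shat (alpha : 'I_n -> F) (c : word) : {poly F} :=
  \sum_(i in supp c) \prod_(j in supp c | j != i) ('X - (alpha j)%:P).

Definition goppa_poly (alpha : 'I_n -> F) (g : {poly F}) : Prop :=
  forall i, g.[alpha i] != 0.

Definition in_goppa (alpha : 'I_n -> F) (g : {poly F}) (c : word) : bool :=
  g %| shat alpha c.

Definition is_binary_goppa_code (C : {vspace word}) : Prop :=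
  exists alpha0 : 'I_n -> F, injective alpha0 /\
  exists g0 : {poly F}, goppa_poly alpha0 g0 /\
    forall c : word, (c \in C) = in_goppa alpha0 g0 c.

Definition extension (alpha : 'I_n -> F) (C : {vspace word}) (u : nat)
  (g : {poly F}) : Prop :=
  goppa_poly alpha g /\ (size g).-1 = u /\
  forall c : word, c \in C -> in_goppa alpha g c.

Definition extendable (alpha : 'I_n -> F) (C : {vspace word}) (u : nat) : Prop :=
  exists g, extension alpha C u g.

(* monic gcd; mgcd 0 h is the monic associate of h *)
Definition mgcd (p q : {poly F}) : {poly F} :=
  (lead_coef (gcdp p q))^-1 *: gcdp p q.

(* "deg g < 2t", valid for g = 0 under any convention for deg 0 since t > 0 *)
Definition deg_lt (g : {poly F}) (k : nat) : bool := (size g <= k)%N.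

(* Step (2): loop over the basis, with early Fail (None) *)
Fixpoint step2 (alpha : 'I_n -> F) (t : nat) (g : {poly F}) (B : seq word)
  : option {poly F} :=
  match B with
  | [::] => Some g
  | c :: B' =>
      let g' := mgcd g (shat alpha c) in
      if deg_lt g' (2 * t) then None else step2 alpha t g' B'
  end.

(* Step (3), single point: "while g(a) = 0, g := g / (x - a)".
   Big-step semantics: strip a g h iff the loop started on g terminates with h. *)
Inductive strip (a : F) : {poly F} -> {poly F} -> Prop :=
| strip_done g : g.[a] != 0 -> strip a g g
| strip_step g h : g.[a] == 0 -> strip a (g %/ ('X - a%:P)) h -> strip a g h.

Inductive strip_seq : seq F -> {poly F} -> {poly F} -> Prop :=
| strip_seq_nil g : strip_seq [::] g g
| strip_seq_cons a s g g1 h :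
    strip a g g1 -> strip_seq s g1 h -> strip_seq (a :: s) g h.

(* GoppaGCD(alpha, t, C) run with basis B terminates with result r
   (None = Fail, Some g = returns g) *)
Definition goppa_gcd_run (alpha : 'I_n -> F) (t : nat) (B : seq word)
  (r : option {poly F}) : Prop :=
  match step2 alpha t 0 B with
  | None => r = None
  | Some g =>
      exists g', strip_seq [seq alpha i | i <- enum 'I_n] g g' /\
        r = (if deg_lt g' (2 * t) then None else Some g')
  end.

End Goppa.

(* Main.v *)
Require Import Defs.
From HB Require Import structures.
From mathcomp Require Import all_boot all_order all_algebra all_field.
Set Implicit Arguments. Unset Strict Implicit. Unset Printing Implicit Defensive.
Import GRing.Theory.
Local Open Scope ring_scope.

Lemma F2cases (k : 'F_2) : k = 0 \/ k = 1.
Proof. case: k => [[|[|//]]] Hk; [left|right]; exact: val_inj. Qed.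

Section Alg.
Variables (F : fieldType) (n : nat) (alpha : 'I_n -> F).
Hypothesis H2 : (2%:R : F) = 0.

Definition phi (c : word n) : {poly F} :=
  \sum_(i in supp c) \prod_(j | j != i) ('X - (alpha j)%:P).

Definition compl (c : word n) : {poly F} :=
  \prod_(j | j \notin supp c) ('X - (alpha j)%:P).

Lemma shat_phi c : shat alpha c * compl c = phi c.
Proof.
rewrite /shat /phi /compl mulr_suml; apply: eq_bigr => i Hi.
rewrite [RHS](bigID (fun j => j \in supp c)) /=.
congr (_ * _); apply: eq_bigl => j; first by rewrite andbC.
by case: eqP => // ->; rewrite Hi.
Qed.

Lemma phiD c c' : phi (c + c') = phi c + phi c'.
Proof.
rewrite /phi !(big_mkcond (fun i => i \in supp _)) -big_split; apply: eq_bigr => i _.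
rewrite /supp !inE mxE.
case: (F2cases (c 0 i)) => ->; case: (F2cases (c' 0 i)) => ->; rewrite /=;
  rewrite ?addr0 ?add0r //.
by rewrite -mulr2n -scaler_nat H2 scale0r.
Qed.

Definition goodp (h : {poly F}) := forall i, h.[alpha i] != 0.

Lemma coprime_compl h c : goodp h -> coprimep h (compl c).
Proof.
move=> Hh; rewrite /compl; apply: (big_ind (fun p => coprimep h p)).
- exact: coprimep1.
- by move=> x y Hx Hy; rewrite coprimepMr Hx.
- by move=> j _; rewrite coprimep_XsubC /root Hh.
Qed.

Lemma dvd_shat_phi h c : goodp h -> (h %| shat alpha c) = (h %| phi c).
Proof. by move=> Hh; rewrite -shat_phi Gauss_dvdpl // coprime_compl. Qed.

Lemma phi0 : phi 0 = 0.
Proof. rewrite /phi big_pred0 // => i; by rewrite /supp inE mxE. Qed.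

Hypothesis Hinj : injective alpha.

Lemma phi_neq0 c : c != 0 -> phi c != 0.
Proof.
move=> Hc.
have [k Hk] : exists k, k \in supp c.
  case: (pickP (fun k => c 0 k == 1)) => [k Hk|H]; first by exists k; rewrite inE.
  case/eqP: Hc; apply/rowP => k; rewrite mxE.
  by case: (F2cases (c 0 k)) => // E; move: (H k); rewrite E.
apply/negP => /eqP E.
have := congr1 (fun p => p.[alpha k]) E; rewrite horner0 horner_sum.
rewrite (bigD1 k Hk) /= [X in _ + X]big1 ?addr0.
  rewrite horner_prod => /eqP/prodf_eq0 [j Hj].
  by rewrite !hornerE subr_eq0 => /eqP /Hinj Ejk; rewrite Ejk eqxx in Hj.
move=> i /andP [_ Hik]; rewrite horner_prod; apply/eqP/prodf_eq0.
by exists k; [rewrite eq_sym | rewrite !hornerE subrr].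
Qed.

Lemma shat_neq0 c : c != 0 -> shat alpha c != 0.
Proof.
move=> /phi_neq0; rewrite -shat_phi; apply: contra => /eqP ->; by rewrite mul0r.
Qed.

Lemma lin_goppa (C : {vspace word n}) B h : goodp h -> basis_of C B ->
  (forall c, c \in B -> h %| shat alpha c) -> forall c, c \in C -> h %| shat alpha c.
Proof.
move=> Hh HB HBc c Hc.
have Hs : c \in span (in_tuple B) by rewrite (span_basis HB).
rewrite (coord_span Hs) dvd_shat_phi //.
apply: (@big_ind _ (fun v : word n => h %| phi v)).
- by rewrite phi0 dvdp0.
- by move=> x y Hx Hy; rewrite phiD dvdp_add.
- move=> i _; case: (F2cases (coord (in_tuple B) i c)) => ->; first by rewrite scale0r phi0 dvdp0.
  rewrite scale1r -dvd_shat_phi //; apply: HBc; exact: mem_nth.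
Qed.

End Alg.

Lemma strip_spec (F : fieldType) (a : F) g h : strip a g h ->
  [/\ h %| g, h.[a] != 0 & forall d, d %| g -> d.[a] != 0 -> d %| h].
Proof.
elim=> {g h} [g Hg | g h Hg _ [IH1 IH2 IH3]].
- by split => //; exact: dvdpp.
- have Hq : g %/ ('X - a%:P) * ('X - a%:P) = g by apply: divpK; rewrite dvdp_XsubCl.
  split => //.
  + apply: dvdp_trans IH1 _; rewrite -{2}Hq; exact: dvdp_mulr (dvdpp _).
  + move=> d Hd Hda; apply: IH3 => //.
    by rewrite -(Gauss_dvdpl _ (q:=('X - a%:P))) ?Hq // coprimep_XsubC.
Qed.

Lemma strip_seq_spec (F : fieldType) (s : seq F) g h : strip_seq s g h ->
  [/\ h %| g, forall a, a \in s -> h.[a] != 0 &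
      forall d, d %| g -> (forall a, a \in s -> d.[a] != 0) -> d %| h].
Proof.
elim=> {s g h} [g | a s g g1 h Hs _ [IH1 IH2 IH3]].
- by split => //; exact: dvdpp.
- case: (strip_spec Hs) => S1 S2 S3; split.
  + exact: dvdp_trans IH1 S1.
  + move=> b; rewrite inE => /orP [/eqP -> | Hb]; last exact: IH2.
    by apply: contra S2 => Hz; apply: (root_dvdp IH1).
  + move=> d Hd Hds; apply: IH3; first by apply: S3 => //; apply: Hds; rewrite mem_head.
    by move=> b Hb; apply: Hds; rewrite inE Hb orbT.
Qed.

Lemma strip_ex (F : fieldType) (a : F) g : g != 0 -> exists h, strip a g h /\ h != 0.
Proof.
elim: {g} (size g).+1 {-2}g (ltnSn (size g)) => // k IH g Hsz Hg.
case: (eqVneq g.[a] 0) => Ha; last by exists g; split => //; constructor.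
set q := g %/ ('X - a%:P).
have Hq : q * ('X - a%:P) = g by apply: divpK; rewrite dvdp_XsubCl /root Ha.
have Hq0 : q != 0 by apply/eqP => q0; move/eqP: Hg; rewrite -Hq q0 mul0r.
have Hsq : (size q < k)%N.
  have Hg0 : (0 < size g)%N by rewrite size_poly_gt0.
  rewrite /q size_divp ?size_XsubC; last by rewrite -size_poly_eq0 size_XsubC.
  by move: Hsz Hg0; case: (size g) => // s; rewrite subn1.
case: (IH q Hsq Hq0) => h [Hh Hh0]; exists h; split => //.
by apply: strip_step => //; rewrite Ha.
Qed.

Lemma strip_seq_ex (F : fieldType) (s : seq F) g : g != 0 ->
  exists h, strip_seq s g h /\ h != 0.
Proof.
elim: s g => [|a s IH] g Hg; first by exists g; split => //; constructor.
case: (strip_ex a Hg) => g1 [H1 H10]; case: (IH g1 H10) => h [H2 H20].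
by exists h; split => //; apply: strip_seq_cons H1 H2.
Qed.

Lemma mgcd_eqp (F : fieldType) (p q : {poly F}) : mgcd p q %= gcdp p q.
Proof.
rewrite /mgcd; case: (eqVneq (gcdp p q) 0) => [->|H]; first by rewrite scaler0 eqpxx.
by apply: eqp_scale; rewrite invr_eq0 lead_coef_eq0 H.
Qed.

Section Step2.
Variables (F : fieldType) (n : nat) (alpha : 'I_n -> F) (t : nat).

Lemma step2_spec B : forall g g0, step2 alpha t g B = Some g0 ->
  [/\ g0 %| g, forall c, c \in B -> g0 %| shat alpha c &
      B != [::] -> ~~ deg_lt g0 (2*t)].
Proof.
elim: B => [|c B IH] g g0 /=.
- by case=> <-; split => //; exact: dvdpp.
- case: ifP => // Hlt Hs; case: (IH _ _ Hs) => S1 S2 S3.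
  have Hg' := mgcd_eqp g (shat alpha c).
  have D1 : mgcd g (shat alpha c) %| g by rewrite (eqp_dvdl _ Hg') dvdp_gcdl.
  have D2 : mgcd g (shat alpha c) %| shat alpha c by rewrite (eqp_dvdl _ Hg') dvdp_gcdr.
  split.
  + exact: dvdp_trans S1 D1.
  + move=> c'; rewrite inE => /orP [/eqP -> | H]; [exact: dvdp_trans S1 D2 | exact: S2].
  + move=> _; case: B IH Hs S1 S2 S3 => [|c2 B] _ Hs S1 _ S3.
      by move: Hs => /= [<-]; rewrite Hlt.
    exact: S3.
Qed.

Lemma step2_complete B h : ~~ deg_lt h (2*t) ->
  (forall c, c \in B -> h %| shat alpha c) -> (forall c, c \in B -> shat alpha c != 0) ->
  forall g, h %| g -> exists g0, step2 alpha t g B = Some g0 /\ h %| g0.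
Proof.
elim: B => [|c B IH] Hdeg HB HB0 g Hg /=; first by exists g.
set g' := mgcd g (shat alpha c).
have Hg' : h %| g'.
  by rewrite /g' (eqp_dvdr _ (mgcd_eqp _ _)) dvdp_gcd Hg HB ?mem_head.
have Hg'0 : g' != 0.
  apply/negP => /eqP E; have := mgcd_eqp g (shat alpha c).
  by rewrite -/g' E eqp_sym eqp0 gcdp_eq0 (negbTE (HB0 c (mem_head _ _))) andbF.
have Hsz : ~~ deg_lt g' (2*t).
  have := dvdp_leq Hg'0 Hg'; move: Hdeg; rewrite /deg_lt -!ltnNge.
  by move=> H1 H2; exact: leq_trans H1 H2.
rewrite (negbTE Hsz); apply: IH => //.
- by move=> c' Hc'; apply: HB; rewrite inE Hc' orbT.
- by move=> c' Hc'; apply: HB0; rewrite inE Hc' orbT.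
Qed.

End Step2.

From mathcomp Require Import zify.

Theorem proposition6p8 (F : finFieldType) (m n : nat)
  (HF : #|F| = (2 ^ m)%N)
  (alpha : 'I_n -> F) (Halpha : injective alpha)
  (t : nat) (Ht : (0 < t)%N)
  (C : {vspace word n}) (HC : is_binary_goppa_code F C)
  (HC0 : C != 0%VS)
  (B : seq (word n)) (HB : basis_of C B) :
  (exists r, goppa_gcd_run alpha t B r) /\
  forall r, goppa_gcd_run alpha t B r ->
    ((exists u g, (2 * t <= u)%N /\ r = Some g /\ extension alpha C u g) <->
     (exists u, (2 * t <= u)%N /\ extendable alpha C u)) /\
    (~ (exists u, (2 * t <= u)%N /\ extendable alpha C u) -> r = None).
Proof.
have H2 : (2%:R : F) = 0 by apply: pcharf0; exact: (card_finPcharP HF).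
have HBnil : B != [::].
  by apply/eqP => E; move: HC0; rewrite -(span_basis HB) E span_nil eqxx.
have HB0 : forall c, c \in B -> shat alpha c != 0.
  by move=> c Hc; apply: shat_neq0 => //; exact: (basis_not0 HB Hc).
have Sound : forall g, goppa_gcd_run alpha t B (Some g) ->
    (2*t <= (size g).-1)%N /\ extension alpha C (size g).-1 g.
  move=> g; rewrite /goppa_gcd_run; case E: step2 => [g0|] // [g' [Hs Hr]].
  case: ifP Hr => // Hlt [->].
  case: (step2_spec E) => S1 S2 _; case: (strip_seq_spec Hs) => T1 T2 _.
  have Hgood : forall i, g'.[alpha i] != 0.
    by move=> i; apply: T2; apply: map_f; rewrite mem_enum.
  split; first by move: Hlt; rewrite /deg_lt; lia.
  split => //; split => // c Hc; rewrite /in_goppa.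
  apply: (lin_goppa H2 Hgood HB) => // c' Hc'.
  exact: dvdp_trans T1 (S2 _ Hc').
have Compl : forall u r, (2*t <= u)%N -> extendable alpha C u ->
    goppa_gcd_run alpha t B r -> exists g, r = Some g.
  move=> u r Hu [h [Hh [Hsz Hc]]].
  have Hhdeg : ~~ deg_lt h (2*t) by rewrite /deg_lt; lia.
  have HBh : forall c, c \in B -> h %| shat alpha c.
    by move=> c Hc'; apply: Hc; exact: (basis_mem HB Hc').
  case: (step2_complete Hhdeg HBh HB0 (dvdp0 h)) => g0 [E Hg0].
  rewrite /goppa_gcd_run E => [[g' [Hs ->]]].
  case: (step2_spec E) => _ _ S3.
  have Hg00 : g0 != 0.
    by apply: contraNneq (S3 HBnil) => ->; rewrite /deg_lt size_poly0.
  case: (strip_seq_spec Hs) => T1 _ T3.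
  have Hhg' : h %| g'.
    by apply: T3 => // a /mapP [i _ ->]; exact: Hh.
  have Hg'0 : g' != 0.
    by apply/eqP => E0; move: T1 Hg00; rewrite E0 dvd0p => ->.
  have := dvdp_leq Hg'0 Hhg'; case: ifP => Hlt; last by eexists.
  move=> Hle; exfalso; rewrite /deg_lt -ltnNge in Hhdeg; rewrite /deg_lt in Hlt.
  by have := leq_trans Hle Hlt; rewrite leqNgt Hhdeg.
split.
  case E: (step2 alpha t 0 B) => [g0|]; last by exists None; rewrite /goppa_gcd_run E.
  case: (step2_spec E) => _ _ S3.
  have Hg00 : g0 != 0.
    by apply: contraNneq (S3 HBnil) => ->; rewrite /deg_lt size_poly0.
  case: (strip_seq_ex [seq alpha i | i <- enum 'I_n] Hg00) => g' [Hs _].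
  exists (if deg_lt g' (2 * t) then None else Some g').
  by rewrite /goppa_gcd_run E; exists g'.
move=> r Hr; split; [split|].
- by case=> u [g [Hu [_ Hext]]]; exists u; split => //; exists g.
- case=> u [Hu Hex]; case: (Compl u r Hu Hex Hr) => g Eg; subst r.
  by case: (Sound g Hr) => H1 H3; exists (size g).-1, g.
- move=> Hn; case: r Hr => // g Hr; case: (Sound g Hr) => H1 H3; exfalso.
  by apply: Hn; exists (size g).-1; split => //; exists g.
Qed.
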